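(* For every $i\in\mathbb{N}$, the family $\{\mathrm{bit}_i:\mathbb{Z}_{2^k}\to\{-1,1\}\}_{k>i}$ is concentrated.
   Context: $\mathbb{Z}_N=\{0,\dots,N-1\}$ with addition mod $N$. $\mathrm{bit}_i:\mathbb{Z}_{2^k}\to\{-1,1\}$ is $\mathrm{bit}_i(x)=(-1)^{x_i}$ where $x=\sum_{j=0}^{k-1}x_j2^j$, $x_j\in\{0,1\}$. For $f:\mathbb{Z}_N\to\mathbb{C}$: $\langle f,g\rangle=\frac1N\sum_x f(x)\overline{g(x)}$, $\|f\|_2^2=\langle f,f\rangle$, $\chi_\alpha(x)=\exp(2\pi i\alpha x/N)$, $\widehat f(\alpha)=\langle f,\chi_\alpha\rangle$, and $f|_\Gamma=\sum_{\alpha\in\Gamma}\widehat f(\alpha)\chi_\alpha$ for $\Gamma\subseteq\mathbb{Z}_N$. A family of functions $f_k:\mathbb{Z}_{N_k}\to\mathbb{C}$ is concentrated if there is a bivariate polynomial $P\in\mathbb{R}[x,y]$ such that for every index $k$ and every $\epsilon>0$ there is $\Gamma_k\subseteq\mathbb{Z}_{N_k}$ with $|\Gamma_k|\le P(\log(N_k),1/\epsilon)$ and $\|f_k-f_k|_{\Gamma_k}\|_2^2<\epsilon$. *)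

(* Defs.v *)
From Stdlib Require Import Reals List Arith.
From Coquelicot Require Import Coquelicot.
Open Scope R_scope.

(* Functions Z_N -> C are represented as nat -> C; only arguments 0..N-1 matter. *)

Definition sumZ (N : nat) (F : nat -> C) : C :=
  fold_right Cplus (RtoC 0) (map F (seq 0 N)).

Definition inner (N : nat) (f g : nat -> C) : C :=
  Cmult (RtoC (/ INR N)) (sumZ N (fun x => Cmult (f x) (Cconj (g x)))).

Definition norm2sq (N : nat) (f : nat -> C) : R := Re (inner N f f).

Definition chi (N alpha : nat) (x : nat) : C :=
  let t := 2 * PI * INR alpha * INR x / INR N in (cos t, sin t).

Definition fhat (N : nat) (f : nat -> C) (alpha : nat) : C := inner N f (chi N alpha).

(* A subset Gamma of Z_N is a boolean predicate on nat, restricted to 0..N-1 *)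
Definition card_sub (N : nat) (Gamma : nat -> bool) : nat :=
  length (filter Gamma (seq 0 N)).

Definition restrict (N : nat) (f : nat -> C) (Gamma : nat -> bool) : nat -> C :=
  fun x => sumZ N (fun alpha =>
    if Gamma alpha then Cmult (fhat N f alpha) (chi N alpha x) else RtoC 0).

(* bivariate real polynomials: finite lists of monomials (c, (a, b)) = c x^a y^b *)
Definition poly2 := list (R * (nat * nat)).
Definition eval2 (P : poly2) (x y : R) : R :=
  fold_right (fun m acc => fst m * x ^ (fst (snd m)) * y ^ (snd (snd m)) + acc) 0 P.

Definition concentrated (K : Type) (N : K -> nat) (f : K -> nat -> C) : Prop :=
  exists P : poly2, forall (k : K) (eps : R), 0 < eps ->
    exists Gamma : nat -> bool,
      INR (card_sub (N k) Gamma) <= eval2 P (ln (INR (N k))) (/ eps) /\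
      norm2sq (N k) (fun x => Cminus (f k x) (restrict (N k) (f k) Gamma x)) < eps.

Definition bit (i : nat) (x : nat) : C :=
  if Nat.eqb ((x / 2 ^ i) mod 2) 0 then RtoC 1 else RtoC (-1).

(* Main.v *)
Require Import Defs.
From Stdlib Require Import Reals Arith Lia Lra Psatz ZArith List.
From Coquelicot Require Import Coquelicot.
Local Open Scope R_scope.
Local Open Scope C_scope.

Lemma fold_plus_acc (l : list C) (a : C) :
  fold_right Cplus a l = fold_right Cplus (RtoC 0) l + a.
Proof. induction l as [|h t IH]; simpl. - ring. - rewrite IH. ring. Qed.

Lemma map_seq_shift {A} (F : nat -> A) s n :
  map F (seq s n) = map (fun x => F (s + x)%nat) (seq 0 n).
Proof.
  revert s. induction n as [|n IH]; intros s; simpl. reflexivity.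
  rewrite Nat.add_0_r. f_equal. rewrite (IH (S s)). rewrite <- seq_shift, map_map.
  apply map_ext. intros a. f_equal. lia.
Qed.

Lemma sumZ_add (b c : nat) F :
  sumZ (b + c) F = sumZ b F + sumZ c (fun x => F (b + x)%nat).
Proof.
  unfold sumZ. rewrite seq_app, map_app, fold_right_app, fold_plus_acc.
  simpl. rewrite (map_seq_shift F b c). reflexivity.
Qed.

Lemma sumZ_S n F : sumZ (S n) F = sumZ n F + F n.
Proof.
  replace (S n) with (n + 1)%nat by lia. rewrite sumZ_add.
  unfold sumZ at 2. simpl. rewrite Nat.add_0_r. ring.
Qed.

Lemma sumZ_0 F : sumZ 0 F = 0.
Proof. reflexivity. Qed.

Lemma sumZ_ext n F G : (forall x, (x < n)%nat -> F x = G x) -> sumZ n F = sumZ n G.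
Proof.
  induction n as [|n IH]; intros H. reflexivity.
  rewrite !sumZ_S, IH, H; auto.
Qed.

Lemma sumZ_plus n F G : sumZ n (fun x => F x + G x) = sumZ n F + sumZ n G.
Proof. induction n as [|n IH]. simpl. unfold sumZ; simpl; ring. rewrite !sumZ_S, IH. ring. Qed.

Lemma sumZ_scal n c F : sumZ n (fun x => c * F x) = c * sumZ n F.
Proof. induction n as [|n IH]. unfold sumZ; simpl; ring. rewrite !sumZ_S, IH. ring. Qed.

Lemma sumZ_zero n : sumZ n (fun _ => 0) = 0.
Proof. induction n as [|n IH]. reflexivity. rewrite sumZ_S, IH. ring. Qed.

Lemma sumZ_const n c : sumZ n (fun _ => c) = RtoC (INR n) * c.
Proof.
  induction n as [|n IH]. unfold sumZ; simpl; ring.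
  rewrite sumZ_S, IH, S_INR, RtoC_plus. ring.
Qed.

Lemma sumZ_swap n m F :
  sumZ n (fun a => sumZ m (fun b => F a b)) = sumZ m (fun b => sumZ n (fun a => F a b)).
Proof.
  induction n as [|n IH]. rewrite sumZ_0. symmetry. apply sumZ_zero.
  rewrite sumZ_S, IH. rewrite <- sumZ_plus. apply sumZ_ext. intros. rewrite sumZ_S. reflexivity.
Qed.

Lemma sumZ_split a b F :
  sumZ (a * b) F = sumZ a (fun q => sumZ b (fun r => F (q * b + r)%nat)).
Proof.
  induction a as [|a IH]. reflexivity.
  replace (S a * b)%nat with (a * b + b)%nat by lia.
  rewrite sumZ_add, sumZ_S, IH. reflexivity.
Qed.

Lemma sumZ_delta n c (h : nat -> C) : (c < n)%nat ->
  sumZ n (fun r => if Nat.eqb r c then h r else 0) = h c.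
Proof.
  induction n as [|n IH]; intros Hc. lia.
  rewrite sumZ_S. destruct (Nat.eq_dec c n) as [->|Hne].
  - rewrite Nat.eqb_refl. rewrite (sumZ_ext _ _ (fun _ => 0)). rewrite sumZ_zero. ring.
    intros x Hx. destruct (Nat.eqb_spec x n). lia. reflexivity.
  - rewrite IH by lia. destruct (Nat.eqb_spec n c). lia. ring.
Qed.

Definition E (t : R) : C := (cos (2 * PI * t), sin (2 * PI * t)).

Lemma E_add a b : E (a + b) = E a * E b.
Proof.
  unfold E, Cmult; simpl. rewrite Rmult_plus_distr_l, cos_plus, sin_plus.
  f_equal; ring.
Qed.

Lemma E_conj a : Cconj (E a) = E (- a).
Proof.
  unfold E, Cconj; simpl. replace (2 * PI * - a)%R with (- (2 * PI * a))%R by ring.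
  rewrite cos_neg, sin_neg. reflexivity.
Qed.

Lemma E_nat (n : nat) : E (INR n) = 1.
Proof.
  unfold E. replace (2 * PI * INR n)%R with (0 + 2 * INR n * PI)%R by ring.
  rewrite cos_period, sin_period, cos_0, sin_0. reflexivity.
Qed.

Lemma E_int (z : Z) : E (IZR z) = 1.
Proof.
  destruct (Z_le_gt_dec 0 z) as [H|H].
  - rewrite <- (Z2Nat.id z H), <- INR_IZR_INZ. apply E_nat.
  - replace (IZR z) with (- INR (Z.to_nat (- z)))%R.
    + rewrite <- E_conj, E_nat. unfold Cconj; simpl. apply injective_projections; simpl; ring.
    + rewrite INR_IZR_INZ, Z2Nat.id by lia. rewrite opp_IZR. ring.
Qed.

Lemma geo (M : nat) (t : R) :
  sumZ M (fun j => E (INR j * t)) * (E t - 1) = E (INR M * t) - 1.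
Proof.
  induction M as [|M IH].
  - rewrite sumZ_0. simpl. replace (0 * t)%R with (IZR 0) by ring. rewrite E_int. ring.
  - rewrite sumZ_S. rewrite Cmult_plus_distr_r, IH. rewrite S_INR.
    replace ((INR M + 1) * t)%R with (INR M * t + t)%R by ring. rewrite E_add. ring.
Qed.

Lemma E_ne1 (r M : Z) : (0 < r < M)%Z -> E (IZR r / IZR M) <> 1.
Proof.
  intros Hr Heq. assert (Hc := f_equal fst Heq). unfold E in Hc; simpl in Hc.
  replace (2 * PI * (IZR r / IZR M))%R with (2 * (PI * (IZR r / IZR M)))%R in Hc by ring.
  rewrite cos_2a_sin in Hc.
  assert (0 < IZR r / IZR M < 1)%R.
  { assert (0 < IZR r)%R by (apply IZR_lt; lia). assert (IZR r < IZR M)%R by (apply IZR_lt; lia).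
    split. apply Rdiv_lt_0_compat; lra. apply (Rmult_lt_reg_r (IZR M)). lra. unfold Rdiv. rewrite Rmult_assoc, Rinv_l by lra. lra. }
  assert (0 < sin (PI * (IZR r / IZR M))).
  { apply sin_gt_0. apply Rmult_lt_0_compat. apply PI_RGT_0. lra.
    pose proof PI_RGT_0. nra. }
  nra.
Qed.

Lemma orth (M : nat) (d : Z) : (0 < M)%nat ->
  sumZ M (fun j => E (INR j * IZR d / INR M)) =
  if (d mod Z.of_nat M =? 0)%Z then RtoC (INR M) else 0.
Proof.
  intros HM. assert (HMR : INR M <> 0%R) by (apply not_0_INR; lia).
  assert (HMZ : Z.of_nat M <> 0%Z) by lia.
  destruct (Z.eqb_spec (d mod Z.of_nat M) 0) as [H|H].
  - apply Z.mod_divide in H; auto. destruct H as [m ->].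
    rewrite (sumZ_ext _ _ (fun _ => 1)). rewrite sumZ_const. ring.
    intros j _. replace (INR j * IZR (m * Z.of_nat M) / INR M)%R with (IZR (Z.of_nat j * m)).
    apply E_int. rewrite !mult_IZR, <- !INR_IZR_INZ. field. auto.
  - set (t := (IZR d / INR M)%R).
    assert (Hg := geo M t).
    replace (INR M * t)%R with (IZR d) in Hg by (unfold t; field; auto).
    rewrite E_int in Hg.
    rewrite (sumZ_ext _ _ (fun j => E (INR j * t))).
    2:{ intros; unfold t; f_equal; unfold Rdiv; ring. }
    assert (Hne : E t - 1 <> 0).
    { intros Hz. assert (Et1 : E t = 1).
      { replace (E t) with ((E t - 1) + 1) by ring. rewrite Hz. ring. }
      pose proof (Z_div_mod_eq_full d (Z.of_nat M)) as Hdm.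
      pose proof (Z.mod_pos_bound d (Z.of_nat M)) as Hb.
      assert (t = IZR (d / Z.of_nat M) + IZR (d mod Z.of_nat M) / IZR (Z.of_nat M))%R.
      { unfold t. rewrite INR_IZR_INZ. rewrite Hdm at 1. rewrite plus_IZR, mult_IZR.
        field. rewrite <- INR_IZR_INZ; auto. }
      rewrite H0, E_add, E_int in Et1.
      apply (E_ne1 (d mod Z.of_nat M) (Z.of_nat M)). lia.
      rewrite <- Et1. ring. }
    replace (sumZ M (fun j => E (INR j * t))) with
      (sumZ M (fun j => E (INR j * t)) * (E t - 1) * / (E t - 1)) by (field; auto).
    rewrite Hg. ring.
Qed.

Lemma cond_eq (M q r x : nat) : (0 < M)%nat -> (r < M)%nat ->
  ((Z.of_nat x - Z.of_nat (q * M + r)) mod Z.of_nat M =? 0)%Z = Nat.eqb r (x mod M).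
Proof.
  intros HM Hr.
  pose proof (Nat.div_mod_eq x M) as Hx.
  pose proof (Nat.mod_upper_bound x M ltac:(lia)) as Hb.
  set (a := (x / M)%nat) in *. set (b := (x mod M)%nat) in *. clearbody a b.
  destruct (Nat.eqb_spec r b).
  - subst r. apply Z.eqb_eq. apply Z.mod_divide; [lia|].
    exists (Z.of_nat a - Z.of_nat q)%Z. subst x. rewrite !Nat2Z.inj_add, !Nat2Z.inj_mul; ring.
  - apply Z.eqb_neq. intro Hm. apply Z.mod_divide in Hm as [k Hk]; [|lia].
    subst x. rewrite !Nat2Z.inj_add, !Nat2Z.inj_mul in Hk.
    assert (Hw : (Z.of_nat b - Z.of_nat r = (k - Z.of_nat a + Z.of_nat q) * Z.of_nat M)%Z)
      by nia.
    set (w := (k - Z.of_nat a + Z.of_nat q)%Z) in Hw. clearbody w.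
    destruct (Z.lt_trichotomy w 0) as [Hw0|[Hw0|Hw0]].
    + assert (w * Z.of_nat M <= - Z.of_nat M)%Z by nia. lia.
    + subst w. lia.
    + assert (w * Z.of_nat M >= Z.of_nat M)%Z by nia. lia.
Qed.

Lemma chi_E (M L a x : nat) : (0 < M)%nat -> (0 < L)%nat ->
  chi (M * L) (a * L) x = E (INR a * INR x / INR M).
Proof.
  intros HM HL. unfold chi, E. rewrite !mult_INR.
  assert (INR M <> 0%R) by (apply not_0_INR; lia).
  assert (INR L <> 0%R) by (apply not_0_INR; lia).
  replace (2 * PI * (INR a * INR L) * INR x / (INR M * INR L))%R
    with (2 * PI * (INR a * INR x / INR M))%R by (field; auto).
  reflexivity.
Qed.

Lemma restrict_eq (M L : nat) (f : nat -> C) (x : nat) :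
  (0 < M)%nat -> (0 < L)%nat ->
  (forall q r, f (q * M + r)%nat = f r) ->
  restrict (M * L) f (fun al => Nat.eqb (al mod L) 0) x = f x.
Proof.
  intros HM HL Hper.
  assert (HMR : INR M <> 0%R) by (apply not_0_INR; lia).
  assert (HLR : INR L <> 0%R) by (apply not_0_INR; lia).
  assert (Hfx : f x = f (x mod M)).
  { rewrite (Nat.div_mod_eq x M) at 1. rewrite Nat.mul_comm. apply Hper. }
  unfold restrict. rewrite sumZ_split.
  set (H := fun al => fhat (M * L) f al * chi (M * L) al x).
  rewrite (sumZ_ext M _ (fun j => H (j * L)%nat)).
  2:{ intros j Hj. rewrite (sumZ_ext L _ (fun t => if Nat.eqb t 0 then H (j * L + t)%nat else 0)).
      rewrite sumZ_delta by lia. rewrite Nat.add_0_r. reflexivity.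
      intros t Ht. rewrite (Nat.add_comm (j * L) t), Nat.Div0.mod_add, Nat.mod_small by lia.
      reflexivity. }
  set (Ej := fun (j y : nat) => E (INR j * IZR (Z.of_nat x - Z.of_nat y) / INR M)).
  rewrite (sumZ_ext M _ (fun j => RtoC (/ INR (M * L)) * sumZ (M * L) (fun y => f y * Ej j y))).
  2:{ intros j Hj. unfold H, fhat, inner.
      transitivity (RtoC (/ INR (M * L)) *
        sumZ (M * L) (fun y => chi (M * L) (j * L) x * (f y * Cconj (chi (M * L) (j * L) y)))).
      { rewrite sumZ_scal. ring. }
      f_equal. apply sumZ_ext. intros y Hy. unfold Ej.
      rewrite !chi_E by lia. rewrite E_conj.
      transitivity (f y * (E (- (INR j * INR y / INR M)) * E (INR j * INR x / INR M))).
      ring. f_equal. rewrite <- E_add. f_equal.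
      rewrite minus_IZR, <- !INR_IZR_INZ. field. auto. }
  rewrite sumZ_scal, sumZ_swap.
  rewrite (sumZ_ext (M * L) _ (fun y => f y *
      (if ((Z.of_nat x - Z.of_nat y) mod Z.of_nat M =? 0)%Z then RtoC (INR M) else 0))).
  2:{ intros y Hy. rewrite <- (orth M) by lia. unfold Ej. rewrite <- sumZ_scal. reflexivity. }
  rewrite (Nat.mul_comm M L) at 2.
  rewrite sumZ_split.
  rewrite (sumZ_ext L _ (fun _ => f (x mod M) * RtoC (INR M))).
  2:{ intros q Hq.
      rewrite (sumZ_ext M _ (fun r => if Nat.eqb r (x mod M) then f r * RtoC (INR M) else 0)).
      apply sumZ_delta. apply Nat.mod_upper_bound; lia.
      intros r Hr. rewrite cond_eq by lia. rewrite Hper.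
      destruct (Nat.eqb r (x mod M)); ring. }
  rewrite sumZ_const, Hfx, mult_INR.
  transitivity (RtoC (/ (INR M * INR L) * (INR L * INR M)) * f (x mod M)).
  rewrite !RtoC_mult. ring.
  replace (/ (INR M * INR L) * (INR L * INR M))%R with 1%R by (field; auto). ring.
Qed.

Lemma filter_nil_all {A} (g : A -> bool) (l : list A) :
  (forall y, In y l -> g y = false) -> filter g l = nil.
Proof.
  induction l as [|h t IH]; intros Hl; simpl. reflexivity.
  rewrite Hl by (left; reflexivity). apply IH. intros; apply Hl; right; auto.
Qed.

Lemma count_mult (M L : nat) : (0 < L)%nat ->
  length (filter (fun al => Nat.eqb (al mod L) 0) (seq 0 (M * L))) = M.
Proof.
  intros HL. induction M as [|m IH]. reflexivity.
  replace (S m * L)%nat with (m * L + L)%nat by lia.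
  rewrite seq_app, filter_app, length_app, IH, Nat.add_0_l.
  destruct L as [|L']. lia.
  cbn [seq filter]. rewrite Nat.Div0.mod_mul. cbn [Nat.eqb length].
  rewrite filter_nil_all. simpl. lia.
  intros y Hy. apply in_seq in Hy.
  replace y with ((y - m * S L') + m * S L')%nat by lia.
  rewrite Nat.Div0.mod_add, Nat.mod_small by lia.
  apply Nat.eqb_neq. lia.
Qed.

Lemma bit_per (i q r : nat) : bit i (q * 2 ^ S i + r)%nat = bit i r.
Proof.
  unfold bit. rewrite Nat.pow_succ_r'.
  replace (q * (2 * 2 ^ i) + r)%nat with ((q * 2) * 2 ^ i + r)%nat by lia.
  rewrite Nat.div_add_l by (apply Nat.pow_nonzero; lia).
  rewrite (Nat.add_comm (q * 2)), Nat.Div0.mod_add. reflexivity.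
Qed.

Close Scope C_scope.
Close Scope R_scope.

Theorem corollary6p4 (i : nat) :
  concentrated {k : nat | (i < k)%nat} (fun k => (2 ^ proj1_sig k)%nat)
    (fun _ => bit i).
Proof.
  exists ((INR (2 ^ S i), (0%nat, 0%nat)) :: nil).
  intros [k Hk] eps Heps. simpl proj1_sig.
  set (M := (2 ^ S i)%nat). set (L := (2 ^ (k - S i))%nat).
  assert (HM : (0 < M)%nat) by (apply Nat.neq_0_lt_0, Nat.pow_nonzero; lia).
  assert (HL : (0 < L)%nat) by (apply Nat.neq_0_lt_0, Nat.pow_nonzero; lia).
  assert (HN : (2 ^ k = M * L)%nat).
  { unfold M, L. rewrite <- Nat.pow_add_r. f_equal. lia. }
  rewrite HN.
  exists (fun al => Nat.eqb (al mod L) 0). split.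
  - unfold card_sub. rewrite count_mult by auto. unfold eval2. simpl. lra.
  - unfold norm2sq, inner.
    rewrite (sumZ_ext _ _ (fun _ => RtoC 0)).
    + rewrite sumZ_zero. simpl. lra.
    + intros x Hx. rewrite restrict_eq; auto.
      * unfold Cminus, Cconj, Cmult, Copp, Cplus. simpl. apply injective_projections; simpl; ring.
      * intros q r. apply bit_per.
Qed.
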